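(* Let $N\ge 2$, let $D_1^N,\ldots,D_N^N:\mathbb{R}_+^N\to\mathbb{R}$ satisfy (A1)–(A3) below, and let the lower-level demand functions $D^n_i$ ($1\le n\le N-1$, $1\le i\le n$) be defined by the consistency recursion below and satisfy (A4). Then for each $n$ the functions $D_i^n$, $i=1,\ldots,n$, are smooth in all variables and satisfy $\partial D_i^n/\partial p_j>0$ for $j\ne i$; they inherit the exchangeability property (A2) (with $N$ replaced by $n$); and for every price vector $p$ with $p_1\le p_2\le\cdots\le p_N$ and every $1\le n\le N$, $$D_1^n(p_1,\ldots,p_n)\ge D_2^n(p_1,\ldots,p_n)\ge\cdots\ge D_n^n(p_1,\ldots,p_n).$$
   Context: (A1) Each $D_i^N$ is smooth, $D_N^N(0,\ldots,0)>0$, $\partial D_i^N/\partial p_i<0$, and $\partial D_i^N/\partial p_j>0$ for $j\ne i$. (A2) Exchangeability: $D_i^N(p_1,\ldots,p_i,\ldots,p_j,\ldots,p_N)=D_j^N(p_1,\ldots,p_j,\ldots,p_i,\ldots,p_N)$ for all $i,j$ (entries $i,j$ swapped), hence $D_i^N$ is invariant under permutations of the other firms' prices. (A3) For every $i$ and every vector of the other prices there is a finite choke price at which $D_i^N=0$. Consistency recursion: for $n=N-1,\ldots,1$, $D_i^n(p_1,\ldots,p_n)=D_i^{n+1}(p_1,\ldots,p_n,\hat p_{n+1})$ for $i\le n$, where $\hat p_{n+1}(p_1,\ldots,p_n)$ is the (finite) price with $D^{n+1}_{n+1}(p_1,\ldots,p_n,\hat p_{n+1})=0$. (A4) $\partial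 D^n_i/\partial p_i<0$ for all $n\le N-1$ and $i\le n$. *)

(* Defs.v *)
From HB Require Import structures.
From mathcomp Require Import all_boot all_order all_algebra.
From mathcomp Require Import reals.
Set Implicit Arguments. Unset Strict Implicit. Unset Printing Implicit Defensive.
Import Order.TTheory GRing.Theory Num.Theory.
Local Open Scope ring_scope.

Section Defs.
Variables (R : realType) (n : nat).

Definition nonneg (p : 'I_n -> R) : Prop := forall j, 0 <= p j.

Definition upd (p : 'I_n -> R) (j : 'I_n) (t : R) : 'I_n -> R :=
  fun k => if k == j then t else p k.

Definition swap (p : 'I_n -> R) (i j : 'I_n) : 'I_n -> R :=
  fun k => if k == i then p j else if k == j then p i else p k.

Definition cont_on (f : ('I_n -> R) -> R) : Prop :=
  forall p, nonneg p -> forall eps : R, 0 < eps ->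
    exists2 d : R, 0 < d & forall q, nonneg q ->
      (forall k, `|q k - p k| < d) -> `|f q - f p| < eps.

(* l is the partial derivative of f w.r.t. p_j at p, within R_+^n
   (two-sided if p_j > 0, right derivative if p_j = 0) *)
Definition has_pd_on (f : ('I_n -> R) -> R) (j : 'I_n) (p : 'I_n -> R) (l : R) : Prop :=
  forall eps : R, 0 < eps ->
    exists2 d : R, 0 < d & forall h : R, h != 0 -> `|h| < d -> 0 <= p j + h ->
      `|(f (upd p j (p j + h)) - f p) / h - l| < eps.

Fixpoint Ck_on (k : nat) (f : ('I_n -> R) -> R) : Prop :=
  cont_on f /\
  match k with
  | 0 => True
  | k'.+1 => exists df : 'I_n -> ('I_n -> R) -> R,
      (forall j p, nonneg p -> has_pd_on f j p (df j p)) /\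
      (forall j, Ck_on k' (df j))
  end.

Definition smooth_on (f : ('I_n -> R) -> R) : Prop := forall k, Ck_on k f.

Definition pd_neg (f : ('I_n -> R) -> R) (j : 'I_n) : Prop :=
  forall p, nonneg p -> exists l, has_pd_on f j p l /\ l < 0.
Definition pd_pos (f : ('I_n -> R) -> R) (j : 'I_n) : Prop :=
  forall p, nonneg p -> exists l, has_pd_on f j p l /\ 0 < l.

Definition exchangeable (D : 'I_n -> ('I_n -> R) -> R) : Prop :=
  forall (i j : 'I_n) p, nonneg p -> D i p = D j (swap p i j).

End Defs.

(* (p_1,...,p_n, h) : the vector p extended by a last entry h *)
Definition ext (R : realType) (n : nat) (p : 'I_n -> R) (h : R) : 'I_n.+1 -> R :=
  fun j => match unlift ord_max j with Some k => p k | None => h end.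

(* Main.v *)
Require Import Defs.
From HB Require Import structures.
From mathcomp Require Import all_boot all_order all_algebra.
From mathcomp Require Import reals classical_sets.
From mathcomp.algebra_tactics Require Import ring lra.
From Stdlib Require Import FunctionalExtensionality.
Import Order.TTheory GRing.Theory Num.Theory.
Local Open Scope ring_scope.

Record filt (X : Type) := Filt {
  fev :> (X -> Prop) -> Prop;
  ev_and_ : forall P Q, fev P -> fev Q -> fev (fun x => P x /\ Q x);
  ev_mono_ : forall P Q : X -> Prop, fev P -> (forall x, P x -> Q x) -> fev Q;
  ev_T_ : fev (fun _ => True) }.
Arguments ev_and_ {X f P Q}.
Arguments ev_mono_ {X f P Q}.
Arguments ev_T_ {X} f.

Section Tends.
Context {R : realType} {X : Type} (F : filt X).
Let ev := @fev X F.
Let ev_and {P Q} : ev P -> ev Q -> ev (fun x => P x /\ Q x) := @ev_and_ X F P Q.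
Let ev_mono {P Q} : ev P -> (forall x, P x -> Q x) -> ev Q := @ev_mono_ X F P Q.
Let ev_T : ev (fun _ => True) := @ev_T_ X F.

Definition tends (u : X -> R) (L : R) := forall eps : R, 0 < eps -> ev (fun x => `|u x - L| < eps).

Lemma tends_const c : tends (fun _ => c) c.
Proof. move=> e he; apply: (ev_mono ev_T) => x _; by rewrite subrr normr0. Qed.

Lemma tends_add {u v L M} : tends u L -> tends v M -> tends (fun x => u x + v x) (L + M).
Proof.
move=> hu hv e he.
have he2 : 0 < e / 2 by lra.
apply: (ev_mono (ev_and (hu _ he2) (hv _ he2))) => x [h1 h2].
rewrite (_ : u x + v x - (L + M) = (u x - L) + (v x - M)); last by ring.
apply: le_lt_trans (ler_normD _ _) _. lra.
Qed.

Lemma tends_opp {u L} : tends u L -> tends (fun x => - u x) (- L).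
Proof.
move=> hu e he; apply: (ev_mono (hu _ he)) => x h.
by rewrite -opprD normrN.
Qed.

Lemma tends_sub {u v L M} : tends u L -> tends v M -> tends (fun x => u x - v x) (L - M).
Proof. by move=> hu hv; move: (tends_add hu (tends_opp hv)). Qed.

Lemma tends_mul {u v L M} : tends u L -> tends v M -> tends (fun x => u x * v x) (L * M).
Proof.
move=> hu hv e he.
set K := 1 + `|L| + `|M|.
have hK : 0 < K by rewrite /K; have := normr_ge0 L; have := normr_ge0 M; lra.
set eta := Num.min 1 (e / K).
have heta : 0 < eta by rewrite /eta lt_min ltr01 divr_gt0.
have heta1 : eta <= 1 by rewrite /eta ge_min lexx.
have hetaK : eta * K <= e.
  rewrite -ler_pdivlMr // /eta ge_min lexx orbT //.
apply: (ev_mono (ev_and (hu _ heta) (hv _ heta))) => x [h1 h2].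
rewrite (_ : u x * v x - L * M = (u x - L) * (v x - M) + L * (v x - M) + M * (u x - L)); last by ring.
apply: le_lt_trans (ler_normD _ _) _.
apply: le_lt_trans (lerD (ler_normD _ _) (lexx _)) _.
rewrite !normrM.
have := normr_ge0 (u x - L); have := normr_ge0 (v x - M).
have := normr_ge0 L; have := normr_ge0 M.
move: h1 h2 hetaK heta1; rewrite /K.
set a := `|u x - L|; set b := `|v x - M|; set l := `|L|; set m := `|M|.
nra.
Qed.

Lemma tends_inv {u L} : L != 0 -> tends u L -> tends (fun x => (u x)^-1) L^-1.
Proof.
move=> hL hu e he.
have hl : 0 < `|L| by rewrite normr_gt0.
set eta := Num.min (`|L| / 2) (e * (`|L| * `|L|) / 2).
have heta : 0 < eta by rewrite /eta lt_min; apply/andP; split; apply: divr_gt0 => //; apply: mulr_gt0 => //; apply: mulr_gt0.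
have heta1 : eta <= `|L| / 2 by rewrite /eta ge_min lexx.
have heta2 : eta <= e * (`|L| * `|L|) / 2 by rewrite /eta ge_min lexx orbT.
apply: (ev_mono (hu _ heta)) => x h.
have hux : `|L| / 2 < `|u x|.
  have := lerB_dist L (L - u x); rewrite (_ : L - (L - u x) = u x); last by ring.
  rewrite distrC in h. lra.
have hu0 : u x != 0 by rewrite -normr_gt0; lra.
rewrite (_ : (u x)^-1 - L^-1 = (L - u x) / (u x * L)); last by field; apply/andP.
rewrite normrM normfV normrM ltr_pdivrMr; last by apply: mulr_gt0 => //; lra.
rewrite distrC in h. nra.
Qed.

Definition proper := forall P, ev P -> exists x, P x.

Lemma tends_uniq {u L M} : proper -> tends u L -> tends u M -> L = M.
Proof.
move=> hp hu hv; apply/eqP; apply/negPn/negP => hne.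
have he : 0 < `|L - M| / 2 by apply: divr_gt0 => //; rewrite normr_gt0 subr_eq0.
have [x [h1 h2]] := hp _ (ev_and (hu _ he) (hv _ he)).
have := ler_distD (u x) L M; rewrite (distrC L (u x)). lra.
Qed.
End Tends.
Section MVI.
Context {R : realType}.

Lemma normle {x y : R} : `|x| <= y -> - y <= x /\ x <= y.
Proof. by move/ler_normlP => [h1 h2]; split; lra. Qed.
Lemma normlt {x y : R} : `|x| < y -> - y < x /\ x < y.
Proof. by move/ltr_normlP => [h1 h2]; split; lra. Qed.

Definition dwithin (phi : R -> R) (a b t l : R) :=
  forall e : R, 0 < e -> exists2 d : R, 0 < d & forall s, a <= s <= b -> `|s - t| < d ->
    `|phi s - phi t - l * (s - t)| <= e * `|s - t|.

Lemma mvi (phi : R -> R) a b M : a <= b ->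
  (forall t, a <= t <= b -> exists l, l <= M /\ dwithin phi a b t l) ->
  phi b - phi a <= M * (b - a).
Proof.
move=> hab H.
suff Hs : forall e, 0 < e -> phi b - phi a <= (M + e) * (b - a).
  case: (ltrP a b) => hab'; last first.
    have -> : b = a by apply/eqP; rewrite eq_le hab'.
    by rewrite !subrr mulr0.
  apply/ler_addgt0Pr => e he.
  have hba : 0 < b - a by lra.
  have := Hs (e / (b - a)) (divr_gt0 he hba).
  rewrite mulrDl mulfVK //; last by rewrite gt_eqF.
move=> e he.
pose E := fun x => a <= x <= b /\ forall y, a <= y <= x -> phi y - phi a <= (M + e) * (y - a).
have Ea : E a.
  split; first by rewrite lexx hab.
  move=> y /andP[h1 h2]; have -> : y = a by apply/eqP; rewrite eq_le h1 h2.
  by rewrite !subrr mulr0.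
have hs : has_sup E.
  split; first by exists a.
  by exists b => x [/andP[_ ->]].
pose c := sup E.
have hub : forall x, E x -> x <= c by move=> x Ex; exact: (sup_upper_bound hs).
have hac : a <= c by exact: hub.
have hcb : c <= b by apply: ge_sup; [exists a | move=> x [/andP[_ ->]]].
have hbelow : forall y, a <= y -> y < c -> phi y - phi a <= (M + e) * (y - a).
  move=> y h1 h2.
  have hcy : 0 < c - y by lra.
  have [x [/andP[_ _] Hx] hx] := sup_adherent hcy hs.
  apply: Hx; rewrite h1 /=; rewrite -/c in hx; lra.
have [l [hlM Hl]] : exists l, l <= M /\ dwithin phi a b c l by apply: H; rewrite hac hcb.
have [d hd Hd] := Hl e he.
have hc : phi c - phi a <= (M + e) * (c - a).
  case: (ltrP a c) => hac'; last first.
    have -> : c = a by apply/eqP; rewrite eq_le hac hac'.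
    by rewrite !subrr mulr0.
  have [y [hy1 hy2 hy3]] : exists y, [/\ a <= y, y < c & c - y < d].
    case: (ltrP (c - d / 2) a) => h.
      by exists a; split => //; lra.
    by exists (c - d / 2); split => //; lra.
  have := Hd y; rewrite hy1 /= (_ : y <= b); last by lra.
  rewrite distrC ger0_norm; last by lra.
  move=> /(_ isT hy3) /normle [h1 h2].
  have := hbelow y hy1 hy2.
  have : 0 <= e * (c - y) by apply: mulr_ge0; lra.
  have : l * (c - y) <= M * (c - y) by apply: ler_wpM2r; lra.
  lra.
have Ec : E c.
  split; first by rewrite hac hcb.
  move=> y /andP[h1 h2]; case: (ltrP y c) => h3; first exact: hbelow.
  by have -> : y = c by apply/eqP; rewrite eq_le h2 h3.
case: (ltrP c b) => hcb'; last first.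
  have ec : c = b by apply/eqP; rewrite eq_le hcb hcb'.
  by case: Ec => _; apply; rewrite -ec hac lexx.
exfalso.
have [y [hy1 hy2 hy3]] : exists y, [/\ c < y, y <= b & y - c < d].
  case: (ltrP b (c + d / 2)) => h.
    by exists b; split => //; lra.
  by exists (c + d / 2); split => //; lra.
have Ey : E y.
  split; first by apply/andP; split => //; lra.
  move=> z /andP[hz1 hz2]; case: (lerP z c) => hz3.
    by case: Ec => _; apply; rewrite hz1 hz3.
  have := Hd z; rewrite (_ : a <= z <= b); last by apply/andP; split; lra.
  rewrite ger0_norm; last by lra.
  move=> /(_ isT) /(_ ltac:(lra)) /normle [h1 h2].
  have : 0 <= e * (z - c) by apply: mulr_ge0; lra.
  have : l * (z - c) <= M * (z - c) by apply: ler_wpM2r; lra.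
  lra.
have := hub y Ey. lra.
Qed.
End MVI.

Section Filters.
Context {R : realType}.

Definition evN_ {m} (p : 'I_m -> R) (P : ('I_m -> R) -> Prop) :=
  exists2 d : R, 0 < d & forall q, nonneg q -> (forall k, `|q k - p k| < d) -> P q.

Lemma evN_and m (p : 'I_m -> R) P Q : evN_ p P -> evN_ p Q -> evN_ p (fun x => P x /\ Q x).
Proof.
move=> [d1 hd1 H1] [d2 hd2 H2]; exists (Num.min d1 d2); first by rewrite lt_min hd1 hd2.
move=> q hq hk; split; [apply: H1 | apply: H2] => // k; have := hk k; rewrite lt_min => /andP[]//.
Qed.
Lemma evN_mono m (p : 'I_m -> R) (P Q : ('I_m -> R) -> Prop) : evN_ p P -> (forall x, P x -> Q x) -> evN_ p Q.
Proof. move=> [d hd H] hPQ; exists d => // q hq hk; apply: hPQ; exact: H. Qed.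
Lemma evN_T m (p : 'I_m -> R) : evN_ p (fun _ => True).
Proof. by exists 1. Qed.
Definition evN {m} (p : 'I_m -> R) : filt ('I_m -> R) :=
  @Filt _ (evN_ p) (@evN_and m p) (@evN_mono m p) (evN_T m p).

Definition evD_ {m} (p : 'I_m -> R) (j : 'I_m) (P : R -> Prop) :=
  exists2 d : R, 0 < d & forall h : R, h != 0 -> `|h| < d -> 0 <= p j + h -> P h.
Lemma evD_and m (p : 'I_m -> R) j P Q : evD_ p j P -> evD_ p j Q -> evD_ p j (fun x => P x /\ Q x).
Proof.
move=> [d1 hd1 H1] [d2 hd2 H2]; exists (Num.min d1 d2); first by rewrite lt_min hd1 hd2.
move=> h hh; rewrite lt_min => /andP[h1 h2] hp; split; [exact: H1 | exact: H2].
Qed.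
Lemma evD_mono m (p : 'I_m -> R) j (P Q : R -> Prop) : evD_ p j P -> (forall x, P x -> Q x) -> evD_ p j Q.
Proof. move=> [d hd H] hPQ; exists d => // h h0 h1 h2; apply: hPQ; exact: H. Qed.
Lemma evD_T m (p : 'I_m -> R) j : evD_ p j (fun _ => True).
Proof. by exists 1. Qed.
Definition evD {m} (p : 'I_m -> R) j : filt R :=
  @Filt _ (evD_ p j) (@evD_and m p j) (@evD_mono m p j) (evD_T m p j).

Lemma evD_proper m (p : 'I_m -> R) j : 0 <= p j -> proper (evD p j).
Proof.
rewrite /proper => hp P /= [d hd H]; exists (d / 2); apply: H; first by rewrite gt_eqF // divr_gt0.
  rewrite gtr0_norm ?divr_gt0 //; lra.
have : 0 < d / 2 by rewrite divr_gt0. lra.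
Qed.

Lemma evN_nonneg {m} (p : 'I_m -> R) : evN p (@nonneg R m).
Proof. by exists 1. Qed.

Lemma evN_close {m} (p : 'I_m -> R) {d} : 0 < d -> evN p (fun q => forall k, `|q k - p k| < d).
Proof. by exists d. Qed.

Lemma cont_onE m (f : ('I_m -> R) -> R) : cont_on f <-> forall p, nonneg p -> tends (evN p) f (f p).
Proof. by split => h p hp; exact: h. Qed.

Lemma has_pdE m (f : ('I_m -> R) -> R) j p l :
  has_pd_on f j p l <-> tends (evD p j) (fun h => (f (upd p j (p j + h)) - f p) / h) l.
Proof. by split => h. Qed.

Lemma pd_uniq {m} {f : ('I_m -> R) -> R} {j p l1 l2} : nonneg p ->
  has_pd_on f j p l1 -> has_pd_on f j p l2 -> l1 = l2.
Proof.
move=> hp /has_pdE h1 /has_pdE h2; exact: (tends_uniq _ (evD_proper _ _ _ (hp j)) h1 h2).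
Qed.

End Filters.

Section Line.
Context {R : realType} {m : nat}.
Implicit Types (z : 'I_m -> R) (f : ('I_m -> R) -> R).

Lemma upd_same z c u : upd z c u c = u.
Proof. by rewrite /upd eqxx. Qed.
Lemma upd_other z c u k : k != c -> upd z c u k = z k.
Proof. by rewrite /upd => /negbTE ->. Qed.
Lemma upd_upd z c u v : upd (upd z c u) c v = upd z c v.
Proof. apply: functional_extensionality => k; rewrite /upd; by case: (k == c). Qed.
Lemma upd_id z c : upd z c (z c) = z.
Proof. apply: functional_extensionality => k; rewrite /upd; by case: eqP => [->|]. Qed.
Lemma upd_nonneg z c u : nonneg z -> 0 <= u -> nonneg (upd z c u).
Proof. move=> hz hu k; rewrite /upd; by case: (k == c). Qed.

Lemma pd_dwithin f z c t l a b : nonneg z -> 0 <= a -> 0 <= t ->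
  has_pd_on f c (upd z c t) l -> dwithin (fun u => f (upd z c u)) a b t l.
Proof.
move=> hz ha ht H e he; have [d hd Hd] := H e he; exists d => // s /andP[hs1 hs2] hst.
case: (eqVneq s t) => [->|hne]; first by rewrite !subrr mulr0 subrr normr0 mulr0.
have hh : s - t != 0 by rewrite subr_eq0.
have := Hd (s - t) hh hst; rewrite upd_same upd_upd (_ : t + (s - t) = s); last by ring.
move=> /(_ ltac:(lra)) h.
have -> : f (upd z c s) - f (upd z c t) - l * (s - t) =
   ((f (upd z c s) - f (upd z c t)) / (s - t) - l) * (s - t).
  by field.
rewrite normrM; apply: ler_wpM2r => //; exact: ltW.
Qed.

Lemma dwithin_opp (phi : R -> R) a b t l : dwithin phi a b t l -> dwithin (fun u => - phi u) a b t (- l).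
Proof.
move=> H e he; have [d hd Hd] := H e he; exists d => // s hs hst.
rewrite (_ : - phi s - - phi t - - l * (s - t) = - (phi s - phi t - l * (s - t))); last by ring.
by rewrite normrN; apply: Hd.
Qed.

Lemma line_le f z c t1 t2 M : nonneg z -> 0 <= t1 -> t1 <= t2 ->
  (forall u, t1 <= u <= t2 -> exists l, l <= M /\ has_pd_on f c (upd z c u) l) ->
  f (upd z c t2) - f (upd z c t1) <= M * (t2 - t1).
Proof.
move=> hz h1 h12 H.
apply: (mvi (fun u => f (upd z c u))) => // t /andP[ht1 ht2].
have [l [hl Hl]] := H t ltac:(by rewrite ht1 ht2).
exists l; split => //; apply: pd_dwithin => //; lra.
Qed.

Lemma has_pd_opp f c p l : has_pd_on f c p l -> has_pd_on (fun y => - f y) c p (- l).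
Proof.
move=> H e he; have [d hd Hd] := H e he; exists d => // h h1 h2 h3.
rewrite (_ : (- f (upd p c (p c + h)) - - f p) / h - - l = - ((f (upd p c (p c + h)) - f p) / h - l)); last by field.
rewrite normrN; exact: Hd.
Qed.

Lemma line_ge f z c t1 t2 M : nonneg z -> 0 <= t1 -> t1 <= t2 ->
  (forall u, t1 <= u <= t2 -> exists l, M <= l /\ has_pd_on f c (upd z c u) l) ->
  M * (t2 - t1) <= f (upd z c t2) - f (upd z c t1).
Proof.
move=> hz h1 h12 H.
have := @line_le (fun y => - f y) z c t1 t2 (- M) hz h1 h12.
have : forall u, t1 <= u <= t2 -> exists l, l <= - M /\ has_pd_on (fun y => - f y) c (upd z c u) l.
  move=> u hu; have [l [hl Hl]] := H u hu; exists (- l); split; first by lra.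
  exact: has_pd_opp.
move=> h /(_ h); lra.
Qed.

Lemma line_bound f z c t L e : nonneg z -> 0 <= t ->
  (forall u, 0 <= u -> `|u - z c| <= `|t - z c| -> exists l, has_pd_on f c (upd z c u) l /\ `|l - L| <= e) ->
  `|f (upd z c t) - f z - L * (t - z c)| <= e * `|t - z c|.
Proof.
move=> hz ht H; have hzc := hz c.
case: (lerP (z c) t) => hct.
  have hrange : forall u, z c <= u <= t -> exists l, has_pd_on f c (upd z c u) l /\ `|l - L| <= e.
    move=> u /andP[hu1 hu2]; apply: H; first by lra.
    rewrite !ger0_norm; lra.
  have h1 := @line_le f z c (z c) t (L + e) hz hzc hct.
  have h2 := @line_ge f z c (z c) t (L - e) hz hzc hct.
  rewrite upd_id in h1 h2.
  have : f (upd z c t) - f z <= (L + e) * (t - z c).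
    apply: h1 => u hu; have [l [Hl hl]] := hrange u hu; exists l; split => //.
    by have [] := normle hl; lra.
  have : (L - e) * (t - z c) <= f (upd z c t) - f z.
    apply: h2 => u hu; have [l [Hl hl]] := hrange u hu; exists l; split => //.
    by have [] := normle hl; lra.
  move=> ha hb; apply/ler_normlP; split; lra.
have hrange : forall u, t <= u <= z c -> exists l, has_pd_on f c (upd z c u) l /\ `|l - L| <= e.
  move=> u /andP[hu1 hu2]; apply: H; first by lra.
  rewrite !ler0_norm; lra.
have h1 := @line_le f z c t (z c) (L + e) hz ht (ltW hct).
have h2 := @line_ge f z c t (z c) (L - e) hz ht (ltW hct).
rewrite upd_id in h1 h2.
have : f z - f (upd z c t) <= (L + e) * (z c - t).
  apply: h1 => u hu; have [l [Hl hl]] := hrange u hu; exists l; split => //.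
  by have [] := normle hl; lra.
have : (L - e) * (z c - t) <= f z - f (upd z c t).
  apply: h2 => u hu; have [l [Hl hl]] := hrange u hu; exists l; split => //.
  by have [] := normle hl; lra.
move=> ha hb; apply/ler_normlP; split; lra.
Qed.
End Line.

Section Joint.
Context {R : realType} {m : nat}.
Implicit Types (z x : 'I_m -> R) (f : ('I_m -> R) -> R).

Lemma dist_upd x c u d k : 0 < d -> `|u - x c| < d -> `|upd x c u k - x k| < d.
Proof. move=> hd h; rewrite /upd; case: eqP => [->//|_]; by rewrite subrr normr0. Qed.

Lemma joint2 f x a b (dA dB : ('I_m -> R) -> R) : a != b -> nonneg x ->
  (forall y, nonneg y -> has_pd_on f a y (dA y)) ->
  (forall y, nonneg y -> has_pd_on f b y (dB y)) ->
  cont_on dA -> cont_on dB ->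
  forall e : R, 0 < e -> exists2 d : R, 0 < d & forall s t, 0 <= s -> 0 <= t ->
    `|s - x a| < d -> `|t - x b| < d ->
    `|f (upd (upd x b t) a s) - f x - dA x * (s - x a) - dB x * (t - x b)|
      <= e * (`|s - x a| + `|t - x b|).
Proof.
move=> hab hx hA hB cA cB e he.
have [d1 hd1 H1] := cA x hx e he.
have [d2 hd2 H2] := cB x hx e he.
exists (Num.min d1 d2); first by rewrite lt_min hd1 hd2.
move=> s t hs ht; rewrite !lt_min => /andP[hs1 hs2] /andP[ht1 ht2].
have step1 : `|f (upd x b t) - f x - dB x * (t - x b)| <= e * `|t - x b|.
  apply: line_bound => // u hu hu2; exists (dB (upd x b u)); split.
    by apply: hB; apply: upd_nonneg.
  apply: ltW; apply: H2; first by apply: upd_nonneg.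
  move=> k; apply: dist_upd => //; lra.
have hxa : upd x b t a = x a by rewrite upd_other.
have step2 : `|f (upd (upd x b t) a s) - f (upd x b t) - dA x * (s - x a)| <= e * `|s - x a|.
  rewrite -hxa.
  apply: line_bound => //; first by apply: upd_nonneg.
  move=> u hu hu2; exists (dA (upd (upd x b t) a u)); split.
    by apply: hA; apply: upd_nonneg => //; apply: upd_nonneg.
  apply: ltW; apply: H1; first by apply: upd_nonneg => //; apply: upd_nonneg.
  move=> k; rewrite /upd; case: eqP => [->|_]; first by rewrite hxa in hu2; lra.
  case: eqP => [->|_]; first by [].
  by rewrite subrr normr0.
have := ler_normD (f (upd (upd x b t) a s) - f (upd x b t) - dA x * (s - x a))
                  (f (upd x b t) - f x - dB x * (t - x b)).
rewrite (_ : f (upd (upd x b t) a s) - f (upd x b t) - dA x * (s - x a) +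
    (f (upd x b t) - f x - dB x * (t - x b)) =
    f (upd (upd x b t) a s) - f x - dA x * (s - x a) - dB x * (t - x b)); last by ring.
lra.
Qed.
End Joint.

Section Algebra.
Context {R : realType}.

Lemma tends_eq {X} (F : filt X) {u v : X -> R} {L} :
  F (fun x => u x = v x) -> tends F u L -> tends F v L.
Proof.
move=> he hu e hpos; apply: (ev_mono_ (ev_and_ he (hu e hpos))) => x [-> //].
Qed.

Lemma tends_ext {X} (F : filt X) {u v : X -> R} {L} :
  (forall x, u x = v x) -> tends F u L -> tends F v L.
Proof. move=> he; apply: tends_eq; apply: (ev_mono_ (ev_T_ F)) => x _; exact: he. Qed.

Context {m : nat}.
Implicit Types (f g : ('I_m -> R) -> R) (p : 'I_m -> R).

Lemma tends_id0 p j : tends (evD p j) (fun h : R => h) 0.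
Proof. move=> e he; exists e => // h _ hh _; by rewrite subr0. Qed.

Lemma evD_close p j {d} : 0 < d -> evD p j (fun h => `|h| < d).
Proof. by move=> hd; exists d. Qed.

Lemma evD_ne0 p j : evD p j (fun h => h != 0).
Proof. by exists 1 => // h. Qed.

Lemma evD_nonneg {p} j : nonneg p -> evD p j (fun h => nonneg (upd p j (p j + h))).
Proof. move=> hp; exists 1 => // h _ _ hh; exact: upd_nonneg. Qed.

Lemma pd_cont {f j p l} : has_pd_on f j p l ->
  tends (evD p j) (fun h => f (upd p j (p j + h))) (f p).
Proof.
move=> /has_pdE H.
have H2 := tends_add _ (tends_const _ (f p)) (tends_mul _ (tends_id0 p j) H).
rewrite mul0r addr0 in H2.
apply: (tends_eq _ _ H2); apply: (ev_mono_ (evD_ne0 p j)) => h hh /=.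
by field.
Qed.

Lemma pd_add f g j p l1 l2 : has_pd_on f j p l1 -> has_pd_on g j p l2 ->
  has_pd_on (fun y => f y + g y) j p (l1 + l2).
Proof.
move=> /has_pdE H1 /has_pdE H2; apply/has_pdE.
apply: (tends_ext _ _ (tends_add _ H1 H2)) => h /=; by rewrite -mulrDl; congr (_ / _); ring.
Qed.

Lemma pd_const c j p : has_pd_on (fun _ => c) j p 0.
Proof. move=> e he; exists 1 => // h *; by rewrite subrr mul0r subrr normr0. Qed.

Lemma pd_mul f g j p l1 l2 : has_pd_on f j p l1 -> has_pd_on g j p l2 ->
  has_pd_on (fun y => f y * g y) j p (l1 * g p + f p * l2).
Proof.
move=> H1 H2; have Hc := pd_cont H2; move/has_pdE: H1 => H1; move/has_pdE: H2 => H2; apply/has_pdE.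
have := tends_add _ (tends_mul _ H1 Hc) (tends_mul _ (tends_const _ (f p)) H2).
apply: tends_eq; apply: (ev_mono_ (evD_ne0 p j)) => h hh /=; by field.
Qed.

Lemma pd_inv f j p l : nonneg p -> (forall y, nonneg y -> f y != 0) -> has_pd_on f j p l ->
  has_pd_on (fun y => (f y)^-1) j p (- l * ((f p)^-1 * (f p)^-1)).
Proof.
move=> hp hf0 H1; have Hc := pd_cont H1; move/has_pdE: H1 => H1; apply/has_pdE.
have hfp := hf0 p hp.
have Hi := tends_inv _ hfp Hc.
have := tends_mul _ (tends_opp _ H1) (tends_mul _ Hi (tends_const _ (f p)^-1)).
apply: tends_eq; apply: (ev_mono_ (ev_and_ (evD_ne0 p j) (evD_nonneg j hp))) => h [hh hn] /=.
have := hf0 _ hn; move=> hq.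
by field; rewrite hh hfp hq.
Qed.

Lemma pd_ext {f g j p l} : nonneg p -> (forall y, nonneg y -> f y = g y) ->
  has_pd_on f j p l -> has_pd_on g j p l.
Proof.
move=> hp he /has_pdE H; apply/has_pdE; apply: (tends_eq _ _ H).
apply: (ev_mono_ (evD_nonneg j hp)) => h hn /=; by rewrite !he.
Qed.

Lemma cont_const c : cont_on (fun _ : 'I_m -> R => c).
Proof. apply/cont_onE => p hp; exact: tends_const. Qed.
Lemma cont_add f g : cont_on f -> cont_on g -> cont_on (fun y => f y + g y).
Proof. move=> /cont_onE hf /cont_onE hg; apply/cont_onE => p hp; exact: (tends_add _ (hf p hp) (hg p hp)). Qed.
Lemma cont_opp f : cont_on f -> cont_on (fun y => - f y).
Proof. move=> /cont_onE hf; apply/cont_onE => p hp; exact: (tends_opp _ (hf p hp)). Qed.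
Lemma cont_mul f g : cont_on f -> cont_on g -> cont_on (fun y => f y * g y).
Proof. move=> /cont_onE hf /cont_onE hg; apply/cont_onE => p hp; exact: (tends_mul _ (hf p hp) (hg p hp)). Qed.
Lemma cont_inv f : (forall y, nonneg y -> f y != 0) -> cont_on f -> cont_on (fun y => (f y)^-1).
Proof. move=> h0 /cont_onE hf; apply/cont_onE => p hp; exact: (tends_inv _ (h0 p hp) (hf p hp)). Qed.
Lemma cont_ext f g : (forall y, nonneg y -> f y = g y) -> cont_on f -> cont_on g.
Proof.
move=> he /cont_onE hf; apply/cont_onE => p hp; rewrite -he //; apply: (tends_eq _ _ (hf p hp)).
by exists 1 => // q hq _; rewrite he.
Qed.

End Algebra.

Section Ck.
Context {R : realType} {m : nat}.
Implicit Types (f g : ('I_m -> R) -> R).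

Lemma Ck_cont {k f} : Ck_on k f -> cont_on f.
Proof. by case: k => [[]|k []]. Qed.

Lemma Ck_le {k f} : Ck_on k.+1 f -> Ck_on k f.
Proof.
elim: k f => [|k IH] f; first by case.
move=> [cf [df [pdf Hf]]]; split => //; exists df; split => // j; exact: IH.
Qed.

Lemma Ck_ext {k f g} : (forall y, nonneg y -> f y = g y) -> Ck_on k f -> Ck_on k g.
Proof.
case: k => [|k] he [cf H].
  by split => //; exact: cont_ext cf.
split; first exact: cont_ext cf.
case: H => df [pdf Hf]; exists df; split => // j p hp; apply: (pd_ext hp he); exact: pdf.
Qed.

Lemma Ck_const k c : Ck_on k (fun _ : 'I_m -> R => c).
Proof.
elim: k c => [|k IH] c; first by split => //; exact: cont_const.
split; first exact: cont_const.
exists (fun _ _ => 0); split; last by move=> j; exact: IH.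
move=> j p _; exact: pd_const.
Qed.

Lemma Ck_add {k f g} : Ck_on k f -> Ck_on k g -> Ck_on k (fun y => f y + g y).
Proof.
elim: k f g => [|k IH] f g [cf Hf] [cg Hg]; first by split => //; exact: cont_add.
split; first exact: cont_add.
case: Hf => df [pdf Hf]; case: Hg => dg [pdg Hg].
exists (fun j y => df j y + dg j y); split.
  move=> j p hp; exact: pd_add (pdf j p hp) (pdg j p hp).
move=> j; exact: IH _ _ (Hf j) (Hg j).
Qed.

Lemma Ck_opp {k f} : Ck_on k f -> Ck_on k (fun y => - f y).
Proof.
elim: k f => [|k IH] f [cf Hf]; first by split => //; exact: cont_opp.
split; first exact: cont_opp.
case: Hf => df [pdf Hf].
exists (fun j y => - df j y); split.
  move=> j p hp; exact: has_pd_opp (pdf j p hp).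
move=> j; exact: IH _ (Hf j).
Qed.

Lemma Ck_mul {k f g} : Ck_on k f -> Ck_on k g -> Ck_on k (fun y => f y * g y).
Proof.
elim: k f g => [|k IH] f g Hf0 Hg0; have [cf Hf] := Hf0; have [cg Hg] := Hg0.
  by split => //; exact: cont_mul.
split; first exact: cont_mul.
case: Hf => df [pdf Hf]; case: Hg => dg [pdg Hg].
exists (fun j y => df j y * g y + f y * dg j y); split.
  move=> j p hp; exact: pd_mul (pdf j p hp) (pdg j p hp).
move=> j; apply: Ck_add; [exact: IH _ _ (Hf j) (Ck_le Hg0) | exact: IH _ _ (Ck_le Hf0) (Hg j)].
Qed.

Lemma Ck_inv {k f} : (forall y, nonneg y -> f y != 0) -> Ck_on k f -> Ck_on k (fun y => (f y)^-1).
Proof.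
move=> h0; elim: k f h0 => [|k IH] f h0 Hf0; have [cf Hf] := Hf0.
  by split => //; exact: cont_inv.
split; first exact: cont_inv.
case: Hf => df [pdf Hf].
exists (fun j y => - df j y * ((f y)^-1 * (f y)^-1)); split.
  move=> j p hp; apply: pd_inv => //; exact: pdf.
have Hinv : Ck_on k (fun y => (f y)^-1) by exact: IH _ h0 (Ck_le Hf0).
move=> j; apply: Ck_mul; first exact: Ck_opp (Hf j).
exact: (Ck_mul Hinv Hinv).
Qed.
End Ck.

Section Ext.
Context {R : realType} {n : nat}.
Implicit Types (p q : 'I_n -> R).

Lemma ext_max p t : ext p t ord_max = t.
Proof. by rewrite /ext unlift_none. Qed.
Lemma ext_lift p t k : ext p t (lift ord_max k) = p k.
Proof. by rewrite /ext liftK. Qed.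
Lemma ext_nonneg {p t} : nonneg p -> 0 <= t -> nonneg (ext p t).
Proof. move=> hp ht k; case: (unliftP ord_max k) => [k'|] ->; by rewrite /ext ?liftK ?unlift_none. Qed.
Lemma ext_upd_max p t s : upd (ext p t) ord_max s = ext p s.
Proof.
apply: functional_extensionality => k; case: (unliftP ord_max k) => [k'|] ->.
  rewrite upd_other; last by rewrite eq_sym neq_lift.
  by rewrite /ext liftK.
by rewrite upd_same ext_max.
Qed.
Lemma ext_upd_lift p t j s : upd (ext p t) (lift ord_max j) s = ext (upd p j s) t.
Proof.
apply: functional_extensionality => k; case: (unliftP ord_max k) => [k'|] ->.
  by rewrite /upd (inj_eq lift_inj) /ext liftK.
rewrite upd_other; last by rewrite neq_lift.
by rewrite /ext unlift_none.
Qed.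
Lemma ext_swap p t i j : swap (ext p t) (lift ord_max i) (lift ord_max j) = ext (swap p i j) t.
Proof.
apply: functional_extensionality => k; case: (unliftP ord_max k) => [k'|] ->.
  by rewrite /swap !(inj_eq lift_inj) /ext !liftK.
have hi : (lift ord_max i == ord_max) = false by rewrite eq_sym (negbTE (neq_lift _ _)).
have hj : (lift ord_max j == ord_max) = false by rewrite eq_sym (negbTE (neq_lift _ _)).
have hi' : (ord_max == lift ord_max i) = false by rewrite (negbTE (neq_lift _ _)).
have hj' : (ord_max == lift ord_max j) = false by rewrite (negbTE (neq_lift _ _)).
by rewrite /swap ?hi ?hj ?hi' ?hj' /ext unlift_none.
Qed.
End Ext.

Section Implicit.
Context {R : realType} {n : nat}.
Variable F : ('I_n.+1 -> R) -> R.
Hypothesis Fneg : pd_neg F ord_max.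
Implicit Types (p q : 'I_n -> R).

Lemma F_dec {p t1 t2} : nonneg p -> 0 <= t1 -> t1 <= t2 -> F (ext p t2) <= F (ext p t1).
Proof.
move=> hp h1 h12.
have := @line_le R n.+1 F (ext p t1) ord_max t1 t2 0 (ext_nonneg hp h1) h1 h12.
rewrite !ext_upd_max mul0r subr_le0; apply => u /andP[hu1 hu2].
have [l [Hl hl]] := Fneg _ (upd_nonneg _ ord_max u (ext_nonneg hp h1) (le_trans h1 hu1)).
by exists l; split => //; exact: ltW.
Qed.

Lemma F_local {p t} : nonneg p -> 0 <= t ->
  exists2 d : R, 0 < d & forall s, 0 < s -> s < d -> F (ext p (t + s)) < F (ext p t).
Proof.
move=> hp ht; have [l [Hl hl]] := Fneg _ (ext_nonneg hp ht).
have hl2 : 0 < - l / 2 by lra.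
have [d hd Hd] := Hl _ hl2; exists d => // s hs hsd.
have := Hd s ltac:(by rewrite gt_eqF) ltac:(rewrite gtr0_norm //) ltac:(rewrite ext_max; lra).
rewrite ext_max ext_upd_max => /normlt [_ hq].
have : (F (ext p (t + s)) - F (ext p t)) / s * s < 0.
  set q := (F (ext p (t + s)) - F (ext p t)) / s.
  have : q < 0 by rewrite /q; lra.
  nra.
rewrite divfK ?gt_eqF //; lra.
Qed.
Lemma F_strict {p t1 t2} : nonneg p -> 0 <= t1 -> t1 < t2 -> F (ext p t2) < F (ext p t1).
Proof.
move=> hp h1 h12; have [d hd Hd] := F_local hp h1.
have [s [hs1 hs2 hs3]] : exists s, [/\ 0 < s, s < d & t1 + s <= t2].
  case: (ltrP (d / 2) (t2 - t1)) => h.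
    by exists (d / 2); split => //; lra.
  by exists (t2 - t1); split => //; lra.
have := Hd s hs1 hs2; have := F_dec hp (_ : 0 <= t1 + s) hs3.
move=> /(_ ltac:(lra)); lra.
Qed.

Lemma F_uniq {p t1 t2} : nonneg p -> 0 <= t1 -> 0 <= t2 ->
  F (ext p t1) = F (ext p t2) -> t1 = t2.
Proof.
move=> hp h1 h2 he; case: (ltgtP t1 t2) => // h.
  by have := F_strict hp h1 h; rewrite he ltxx.
by have := F_strict hp h2 h; rewrite he ltxx.
Qed.

Hypothesis Fcont : cont_on F.
Variable h : ('I_n -> R) -> R.
Hypothesis hpos : forall p, nonneg p -> 0 <= h p.
Hypothesis hzero : forall p, nonneg p -> F (ext p (h p)) = 0.

Lemma ext_close {p q} t {d} : 0 < d -> (forall k, `|q k - p k| < d) -> forall k, `|ext q t k - ext p t k| < d.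
Proof.
move=> hd H k; case: (unliftP ord_max k) => [k'|] ->; rewrite /ext ?liftK ?unlift_none //.
by rewrite subrr normr0.
Qed.

Lemma h_cont p : nonneg p -> tends (evN p) h (h p).
Proof.
move=> hp e he.
have ht0 := hpos _ hp; have hz := hzero _ hp; set t0 := h p in ht0 hz *.
have up : evN p (fun q => h q < t0 + e).
  have hF : F (ext p (t0 + e)) < 0 by rewrite -hz; apply: F_strict => //; lra.
  have hF' : 0 < - F (ext p (t0 + e)) by lra.
  have ht0e : 0 <= t0 + e by lra.
  have [d hd Hd] := Fcont _ (ext_nonneg hp ht0e) _ hF'.
  exists d => // q hq hk.
  have := Hd (ext q (t0 + e)) (ext_nonneg hq ht0e) (ext_close _ hd hk).
  move=> /normlt [_ h2].
  case: (ltrP (h q) (t0 + e)) => // hc; exfalso.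
  have := F_dec hq ht0e hc; rewrite hzero //; lra.
have lo : evN p (fun q => t0 - e < h q).
  case: (ltrP (t0 - e) 0) => hlt.
    by exists 1 => // q hq _; have := hpos _ hq; lra.
  have hF : 0 < F (ext p (t0 - e)) by rewrite -hz; apply: F_strict => //; lra.
  have [d hd Hd] := Fcont _ (ext_nonneg hp hlt) _ hF.
  exists d => // q hq hk.
  have := Hd (ext q (t0 - e)) (ext_nonneg hq hlt) (ext_close _ hd hk).
  move=> /normlt [h1 _].
  case: (ltrP (t0 - e) (h q)) => // hc; exfalso.
  have := F_dec hq (hpos _ hq) hc; rewrite hzero //; lra.
apply: (ev_mono_ (ev_and_ up lo)) => q [h1 h2]; apply/ltr_normlP; split; lra.
Qed.
Lemma cont_comp (Phi : ('I_n.+1 -> R) -> R) : cont_on Phi -> cont_on (fun p => Phi (ext p (h p))).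
Proof.
move=> cP; apply/cont_onE => p hp e he.
have [d hd Hd] := cP _ (ext_nonneg hp (hpos _ hp)) e he.
have Hh := h_cont _ hp _ hd.
apply: (ev_mono_ (ev_and_ Hh (ev_and_ (evN_close p hd) (evN_nonneg p)))) => q [h1 [h2 hq]].
apply: Hd; first exact: ext_nonneg hq (hpos _ hq).
move=> k; case: (unliftP ord_max k) => [k'|] ->; rewrite /ext ?liftK ?unlift_none //.
Qed.

Lemma evN_to_evD {P : ('I_n -> R) -> Prop} {q} j : nonneg q -> evN q P ->
  evD q j (fun s => P (upd q j (q j + s))).
Proof.
move=> hq [d hd H]; exists d => // s _ hs hqs; apply: H; first exact: upd_nonneg.
move=> k; apply: dist_upd => //; by rewrite (_ : q j + s - q j = s); last ring.
Qed.

Lemma alg1 (A B D s e eps : R) : B != 0 -> s != 0 ->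
  `|A * s + B * D| <= e * (`|s| + `|D|) -> e <= `|B| / 2 ->
  e * (4 * (1 + `|- A / B|)) <= eps * `|B| -> 0 < eps ->
  `|D / s - - A / B| < eps.
Proof.
move=> hB hs H he1 he2 heps.
set r := D / s; set c := - A / B.
have hD : D = r * s by rewrite /r divfK.
have hb : 0 < `|B| by rewrite normr_gt0.
have hsn : 0 < `|s| by rewrite normr_gt0.
have H2 : `|B| * `|r - c| <= e * (1 + `|r|).
  have : `|A * s + B * D| = `|s| * (`|B| * `|r - c|).
    rewrite -!normrM; congr `|_|; rewrite hD /c; field; exact: hB.
  move=> he; rewrite he hD normrM in H.
  have : `|s| * (`|B| * `|r - c|) <= `|s| * (e * (1 + `|r|)).
    apply: le_trans H _; rewrite -(mulrC `|s|); lra.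
  by rewrite ler_pM2l.
have H3 : `|r| <= `|r - c| + `|c|.
  by have := ler_normD (r - c) c; rewrite subrK.
have e0 : 0 <= e.
  have : 0 <= e * (`|s| + `|D|) by apply: le_trans H.
  have : 0 < `|s| + `|D| by have := normr_ge0 D; lra.
  move=> h1 h2; by rewrite (pmulr_lge0 _ h1) in h2.
set X := `|r - c| in H2 H3 *; set C := `|c| in he2 H3 *; set b := `|B| in hb H2 he1 he2 *.
have hX : 0 <= X by rewrite /X.
have hC : 0 <= C by rewrite /C.
have h4 : e * X <= b / 2 * X by apply: ler_wpM2r.
have h5 : e * `|r| <= e * (X + C) by apply: ler_wpM2l.
have h6 : b * X <= 2 * e * (1 + C) by nra.
have h7 : b * X <= b * (eps / 2) by nra.
have : X <= eps / 2 by rewrite -(ler_pM2l hb).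
lra.
Qed.
Variable dF : 'I_n.+1 -> ('I_n.+1 -> R) -> R.
Hypothesis hdF : forall c y, nonneg y -> has_pd_on F c y (dF c y).
Hypothesis cdF : forall c, cont_on (dF c).

Lemma dF_neg y : nonneg y -> dF ord_max y < 0.
Proof.
move=> hy; have [l [Hl hl]] := Fneg _ hy.
by rewrite (pd_uniq hy (hdF ord_max _ hy) Hl).
Qed.

Lemma g_upd q j s t : upd (upd (ext q (h q)) ord_max t) (lift ord_max j) s = ext (upd q j s) t.
Proof. by rewrite ext_upd_max ext_upd_lift. Qed.

Lemma ext_at_lift q t j : ext q t (lift ord_max j) = q j.
Proof. by rewrite /ext liftK. Qed.

Lemma h_deriv q j : nonneg q ->
  has_pd_on h j q (- dF (lift ord_max j) (ext q (h q)) / dF ord_max (ext q (h q))).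
Proof.
move=> hq; apply/has_pdE => eps heps.
set y := ext q (h q).
have hy : nonneg y := ext_nonneg hq (hpos _ hq).
set A := dF (lift ord_max j) y; set B := dF ord_max y.
have hB : B != 0 by rewrite lt_eqF // dF_neg.
have hb : 0 < `|B| by rewrite normr_gt0.
set e := Num.min (`|B| / 2) (eps * `|B| / (4 * (1 + `|- A / B|))).
have hpos4 : 0 < 4 * (1 + `|- A / B|) by have := normr_ge0 (- A / B); lra.
have he : 0 < e by rewrite lt_min; apply/andP; split; [lra | apply: divr_gt0 => //; exact: mulr_gt0].
have he1 : e <= `|B| / 2 by rewrite ge_min lexx.
have he2 : e * (4 * (1 + `|- A / B|)) <= eps * `|B|.
  rewrite -ler_pdivlMr // /e ge_min lexx orbT //.
have hab : lift ord_max j != ord_max by rewrite eq_sym neq_lift.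
have [d hd Hd] := @joint2 R n.+1 F y (lift ord_max j) ord_max (dF (lift ord_max j)) (dF ord_max)
   hab hy (hdF _) (hdF _) (cdF _) (cdF _) e he.
have E1 := evN_to_evD j hq (h_cont _ hq _ hd).
apply: (ev_mono_ (ev_and_ E1 (ev_and_ (evD_ne0 q j) (ev_and_ (evD_nonneg j hq) (evD_close q j hd))))).
move=> s [h1 [hs [hn hsd]]].
set q' := upd q j (q j + s) in h1 hn *.
have hqj : 0 <= q j + s by have := hn j; rewrite /q' upd_same.
have := Hd (q j + s) (h q') hqj (hpos _ hn).
rewrite /y ext_at_lift ext_max (_ : q j + s - q j = s); last by ring.
move=> /(_ hsd h1); rewrite g_upd hzero // hzero // -/y -/A -/B.
rewrite (_ : 0 - 0 - A * s - B * (h q' - h q) = - (A * s + B * (h q' - h q))); last by ring.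
rewrite normrN => H.
exact: (@alg1 A B (h q' - h q) s e eps hB hs H he1 he2 heps).
Qed.
Lemma alg2 (N D s e c eps : R) : s != 0 -> 0 < eps ->
  `|N| <= e * (`|s| + `|D|) -> `|D / s - c| < 1 -> e * (2 * (2 + `|c|)) <= eps ->
  `|N / s - 0| < eps.
Proof.
move=> hs heps H Hr He.
rewrite subr0.
have hsn : 0 < `|s| by rewrite normr_gt0.
have hD : `|D| = `|D / s| * `|s| by rewrite -normrM divfK.
have hr : `|D / s| <= 1 + `|c|.
  have := ler_normD (D / s - c) c; rewrite subrK; lra.
have e0 : 0 <= e.
  have : 0 <= e * (`|s| + `|D|) by apply: le_trans H.
  have : 0 < `|s| + `|D| by have := normr_ge0 D; lra.
  move=> h1 h2; by rewrite (pmulr_lge0 _ h1) in h2.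
have H2 : `|N| <= e * (2 + `|c|) * `|s|.
  apply: le_trans H _; rewrite hD.
  set a := `|D / s| in hr *; set b := `|s| in hsn *.
  have : e * a * b <= e * (1 + `|c|) * b.
    by apply: ler_wpM2r; [lra | apply: ler_wpM2l].
  lra.
rewrite normrM normfV ltr_pdivrMr //.
apply: le_lt_trans H2 _.
have : 0 <= `|c| := normr_ge0 c.
nra.
Qed.

Lemma chain (Phi : ('I_n.+1 -> R) -> R) (dP : 'I_n.+1 -> ('I_n.+1 -> R) -> R) :
  (forall c y, nonneg y -> has_pd_on Phi c y (dP c y)) -> (forall c, cont_on (dP c)) ->
  forall q j, nonneg q ->
  has_pd_on (fun p => Phi (ext p (h p))) j q
    (dP (lift ord_max j) (ext q (h q)) + dP ord_max (ext q (h q)) *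
      (- dF (lift ord_max j) (ext q (h q)) / dF ord_max (ext q (h q)))).
Proof.
move=> hdP cdP q j hq; apply/has_pdE.
set y := ext q (h q).
have hy : nonneg y := ext_nonneg hq (hpos _ hq).
set Pa := dP (lift ord_max j) y; set Pb := dP ord_max y.
set c := - dF (lift ord_max j) y / dF ord_max y.
have Hr := h_deriv q j hq; move/has_pdE: Hr => Hr.
pose E := fun s => (Phi (ext (upd q j (q j + s)) (h (upd q j (q j + s)))) - Phi y - Pa * s
             - Pb * (h (upd q j (q j + s)) - h q)) / s.
have TE : tends (evD q j) E 0.
  move=> eps heps.
  have hK : 0 < 2 * (2 + `|c|) by have := normr_ge0 c; lra.
  set e := eps / (2 * (2 + `|c|)).
  have he : 0 < e by apply: divr_gt0.
  have He : e * (2 * (2 + `|c|)) <= eps by rewrite /e divfK ?gt_eqF.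
  have hab : lift ord_max j != ord_max by rewrite eq_sym neq_lift.
  have [d hd Hd] := @joint2 R n.+1 Phi y (lift ord_max j) ord_max (dP (lift ord_max j)) (dP ord_max)
     hab hy (hdP _) (hdP _) (cdP _) (cdP _) e he.
  have E1 := evN_to_evD j hq (h_cont _ hq _ hd).
  apply: (ev_mono_ (ev_and_ E1 (ev_and_ (evD_ne0 q j) (ev_and_ (evD_nonneg j hq)
     (ev_and_ (evD_close q j hd) (Hr _ ltr01)))))).
  move=> s [h1 [hs [hn [hsd hrc]]]].
  set q' := upd q j (q j + s) in h1 hn hrc *.
  have hqj : 0 <= q j + s by have := hn j; rewrite /q' upd_same.
  have := Hd (q j + s) (h q') hqj (hpos _ hn).
  rewrite /y ext_at_lift ext_max (_ : q j + s - q j = s); last by ring.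
  move=> /(_ hsd h1); rewrite g_upd -/y -/Pa -/Pb => H.
  rewrite /E -/q'; exact: (@alg2 _ (h q' - h q) s e c eps hs heps H hrc He).
have T := tends_add _ (tends_add _ (tends_const _ Pa) (tends_mul _ (tends_const _ Pb) Hr)) TE.
rewrite addr0 in T; apply: (tends_eq _ _ T).
apply: (ev_mono_ (evD_ne0 q j)) => s hs /=; rewrite /E; field; exact: hs.
Qed.
End Implicit.

Section Comp.
Context {R : realType} {n : nat}.
Variable F : ('I_n.+1 -> R) -> R.
Hypothesis Fneg : pd_neg F ord_max.
Hypothesis Fsm : smooth_on F.
Variable h : ('I_n -> R) -> R.
Hypothesis hpos : forall p, nonneg p -> 0 <= h p.
Hypothesis hzero : forall p, nonneg p -> F (ext p (h p)) = 0.

Let Fcont : cont_on F := Ck_cont (Fsm 0).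

Lemma comp_Ck k : forall Phi, Ck_on k Phi -> Ck_on k (fun p => Phi (ext p (h p))).
Proof.
elim: k => [|k IH] Phi.
  move=> [cP _]; split => //; exact: (cont_comp _ Fneg Fcont _ hpos hzero _ cP).
move=> [cP [dP [pdP HP]]].
have [_ [dF [pdF HF]]] := Fsm k.+1.
split; first exact: (cont_comp _ Fneg Fcont _ hpos hzero _ cP).
exists (fun j p => dP (lift ord_max j) (ext p (h p)) + dP ord_max (ext p (h p)) *
      (- dF (lift ord_max j) (ext p (h p)) / dF ord_max (ext p (h p)))).
split.
  move=> j q hq.
  exact: (chain _ Fneg Fcont _ hpos hzero _ pdF (fun c => Ck_cont (HF c)) _ _ pdP (fun c => Ck_cont (HP c)) _ j hq).
move=> j.
apply: (IH (fun y => dP (lift ord_max j) y + dP ord_max y * (- dF (lift ord_max j) y / dF ord_max y))).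
apply: Ck_add; first exact: HP.
apply: Ck_mul; first exact: HP.
apply: Ck_mul; first exact: Ck_opp (HF _).
apply: Ck_inv; last exact: HF.
move=> y hy; by rewrite lt_eqF // (dF_neg _ Fneg _ pdF _ hy).
Qed.
End Comp.

Section Step.
Context {R : realType}.

Lemma swap3 m (y : 'I_m -> R) a b c : a != b -> a != c -> b != c ->
  swap (swap (swap y c a) a b) b c = swap y a b.
Proof.
move=> hab hac hbc.
have Hab : (a == b) = false by apply/negbTE.
have Hba : (b == a) = false by rewrite eq_sym; apply/negbTE.
have Hac : (a == c) = false by apply/negbTE.
have Hca : (c == a) = false by rewrite eq_sym; apply/negbTE.
have Hbc : (b == c) = false by apply/negbTE.
have Hcb : (c == b) = false by rewrite eq_sym; apply/negbTE.
apply: functional_extensionality => k; rewrite /swap /=.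
case: (eqVneq k a) => [Ek|hka]; first by subst k; rewrite ?eqxx ?Hab ?Hba ?Hac ?Hca ?Hbc ?Hcb.
case: (eqVneq k b) => [Ek|hkb]; first by subst k; rewrite ?eqxx ?Hab ?Hba ?Hac ?Hca ?Hbc ?Hcb.
case: (eqVneq k c) => [Ek|hkc]; first by subst k; rewrite ?eqxx ?Hab ?Hba ?Hac ?Hca ?Hbc ?Hcb.
by rewrite ?(negbTE hka) ?(negbTE hkb) ?(negbTE hkc).
Qed.

Lemma swap_nonneg {m} {y : 'I_m -> R} {a b} : nonneg y -> nonneg (swap y a b).
Proof. move=> hy k; rewrite /swap; by case: (k == a); case: (k == b). Qed.

Lemma exch_inv m (D : 'I_m -> ('I_m -> R) -> R) a b c y : exchangeable D -> nonneg y ->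
  a != c -> b != c -> D c y = D c (swap y a b).
Proof.
move=> hE hy hac hbc; case: (eqVneq a b) => [<-|hab].
  congr (D c); apply: functional_extensionality => k; rewrite /swap /=.
  by case: (eqVneq k a) => [Ek|hk]; [subst k|].
rewrite (hE c a y hy) (hE a b _ (swap_nonneg hy)) (hE b c _ (swap_nonneg (swap_nonneg hy))).
by rewrite swap3.
Qed.
End Step.

Section Step2.
Context {R : realType} {n : nat}.

Lemma step (Dn : 'I_n -> ('I_n -> R) -> R) (Dm : 'I_n.+1 -> ('I_n.+1 -> R) -> R) (h : ('I_n -> R) -> R) :
  (forall i, smooth_on (Dm i)) -> (forall i j, i != j -> pd_pos (Dm i) j) -> exchangeable Dm ->
  pd_neg (Dm ord_max) ord_max ->
  (forall p, nonneg p -> 0 <= h p) -> (forall p, nonneg p -> Dm ord_max (ext p (h p)) = 0) ->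
  (forall p, nonneg p -> forall i, Dn i p = Dm (lift ord_max i) (ext p (h p))) ->
  (forall i, smooth_on (Dn i)) /\ (forall i j, i != j -> pd_pos (Dn i) j) /\ exchangeable Dn.
Proof.
move=> Hsm Hpos Hex Hneg hpos hzero hrec.
have Fcont : cont_on (Dm ord_max) := Ck_cont (Hsm ord_max 0%N).
split.
  move=> i k; apply: (Ck_ext (f := fun p => Dm (lift ord_max i) (ext p (h p)))).
    by move=> y hy; rewrite hrec.
  exact: (comp_Ck _ Hneg (Hsm ord_max) _ hpos hzero _ _ (Hsm _ k)).
split.
  move=> i j hij p hp.
  have [_ [dP [pdP HP]]] := Hsm (lift ord_max i) 1%N.
  have [_ [dF [pdF HF]]] := Hsm ord_max 1%N.
  have hy : nonneg (ext p (h p)) := ext_nonneg hp (hpos _ hp).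
  have Hc := chain _ Hneg Fcont _ hpos hzero _ pdF (fun c => proj1 (HF c)) _ _ pdP (fun c => proj1 (HP c)) _ j hp.
  eexists; split; first by apply: (pd_ext hp _ Hc) => q hq; rewrite hrec.
  set y := ext p (h p) in hy *.
  have h1 : 0 < dP (lift ord_max j) y.
    have hne : lift ord_max i != lift ord_max j by rewrite (inj_eq lift_inj).
    have [l [Hl hl]] := Hpos _ _ hne y hy.
    by rewrite (pd_uniq hy (pdP _ _ hy) Hl).
  have h2 : 0 < dP ord_max y.
    have hne : lift ord_max i != ord_max by rewrite eq_sym neq_lift.
    have [l [Hl hl]] := Hpos _ _ hne y hy.
    by rewrite (pd_uniq hy (pdP _ _ hy) Hl).
  have h3 : 0 < dF (lift ord_max j) y.
    have hne : ord_max != lift ord_max j by rewrite neq_lift.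
    have [l [Hl hl]] := Hpos _ _ hne y hy.
    by rewrite (pd_uniq hy (pdF _ _ hy) Hl).
  have h4 : dF ord_max y < 0 := dF_neg _ Hneg _ pdF _ hy.
  have h5 : 0 < - dF (lift ord_max j) y / dF ord_max y.
    have -> : - dF (lift ord_max j) y / dF ord_max y = dF (lift ord_max j) y / (- dF ord_max y).
      by rewrite invrN mulrN mulNr.
    by apply: divr_gt0; lra.
  apply: addr_gt0 => //; exact: mulr_gt0.
move=> i j p hp.
have hs : nonneg (swap p i j) := swap_nonneg hp.
have hy : nonneg (ext p (h p)) := ext_nonneg hp (hpos _ hp).
rewrite hrec // hrec //.
have E : h (swap p i j) = h p.
  apply: (F_uniq _ Hneg hs (hpos _ hs) (hpos _ hp)); rewrite hzero //.
  have hac : lift ord_max i != ord_max by rewrite eq_sym neq_lift.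
  have hbc : lift ord_max j != ord_max by rewrite eq_sym neq_lift.
  by rewrite -ext_swap -(@exch_inv R n.+1 Dm _ _ ord_max _ Hex hy hac hbc) hzero.
rewrite E -ext_swap; exact: Hex.
Qed.
End Step2.

Lemma mono_level {R : realType} m (D : 'I_m -> ('I_m -> R) -> R) (q : 'I_m -> R) i j :
  nonneg q -> exchangeable D -> (forall i j, i != j -> pd_pos (D i) j) -> (forall i, pd_neg (D i) i) ->
  q i <= q j -> D j q <= D i q.
Proof.
move=> hq hE hP hN hij.
case: (eqVneq i j) => [->//|ne].
rewrite (hE j i q hq).
change (swap q j i) with (upd (upd q i (q j)) j (q i)).
have hqi := hq i; have hqj := hq j.
set z := upd q i (q j).
have hz : nonneg z := upd_nonneg _ _ _ hq hqj.
have hzj : z j = q j by rewrite /z upd_other // eq_sym.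
have A : 0 * (q j - q i) <= D i (upd z j (q j)) - D i (upd z j (q i)).
  apply: line_ge => // u /andP[hu1 hu2].
  have [l [Hl hl]] := hP i j ne _ (upd_nonneg z j u hz (le_trans hqi hu1)).
  by exists l; split => //; exact: ltW.
have B : D i (upd q i (q j)) - D i (upd q i (q i)) <= 0 * (q j - q i).
  apply: line_le => // u /andP[hu1 hu2].
  have [l [Hl hl]] := hN i _ (upd_nonneg q i u hq (le_trans hqi hu1)).
  by exists l; split => //; exact: ltW.
rewrite -hzj upd_id in A; rewrite upd_id -/z in B.
rewrite mul0r in A B; lra.
Qed.

From mathcomp Require Import zify.
From Stdlib Require Import Classical ClassicalEpsilon.

Theorem proposition2p3 (R : realType) (N : nat)
  (D : forall n : nat, 'I_n -> ('I_n -> R) -> R) :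
  (2 <= N)%N ->
  (* (A1) *)
  (forall i : 'I_N, smooth_on (D N i)) ->
  (forall i : 'I_N, nat_of_ord i = N.-1 -> 0 < D N i (fun _ => 0)) ->
  (forall i : 'I_N, pd_neg (D N i) i) ->
  (forall i j : 'I_N, i != j -> pd_pos (D N i) j) ->
  (* (A2) *)
  exchangeable (D N) ->
  (* (A3) *)
  (forall (i : 'I_N) (p : 'I_N -> R), nonneg p ->
     exists h : R, 0 <= h /\ D N i (upd p i h) = 0) ->
  (* consistency recursion: D^n(p) = D^{n+1}(p, hat p_{n+1}) with hat p_{n+1} the choke price *)
  (forall n : nat, (1 <= n < N)%N -> forall p : 'I_n -> R, nonneg p ->
     exists h : R, 0 <= h /\ D n.+1 ord_max (ext p h) = 0 /\
       forall i : 'I_n, D n i p = D n.+1 (lift ord_max i) (ext p h)) ->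
  (* (A4) *)
  (forall n : nat, (1 <= n < N)%N -> forall i : 'I_n, pd_neg (D n i) i) ->
  (forall n : nat, (1 <= n <= N)%N ->
     (forall i : 'I_n, smooth_on (D n i)) /\
     (forall i j : 'I_n, i != j -> pd_pos (D n i) j) /\
     exchangeable (D n)) /\
  (forall p : 'I_N -> R, nonneg p ->
     (forall i j : 'I_N, (i <= j)%N -> p i <= p j) ->
     forall (n : nat) (hn : (n <= N)%N), (1 <= n)%N ->
     forall i j : 'I_n, (i <= j)%N ->
       D n j (fun k => p (widen_ord hn k)) <= D n i (fun k => p (widen_ord hn k))).
Proof.
move=> H2N A1sm A1pos0 A1neg A1pos A2 A3 Hrec A4.
have Hch : forall n, (1 <= n < N)%N -> exists hf : ('I_n -> R) -> R, forall p, nonneg p ->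
    0 <= hf p /\ D n.+1 ord_max (ext p (hf p)) = 0 /\
    forall i, D n i p = D n.+1 (lift ord_max i) (ext p (hf p)).
  move=> n hn.
  have Hf : forall p : 'I_n -> R, exists t : R, nonneg p -> 0 <= t /\ D n.+1 ord_max (ext p t) = 0 /\
      forall i, D n i p = D n.+1 (lift ord_max i) (ext p t).
    move=> p; case: (classic (nonneg p)) => hp.
      by have [t Ht] := Hrec n hn p hp; exists t.
    by exists 0.
  exists (fun p => proj1_sig (constructive_indefinite_description _ (Hf p))).
  move=> p hp; exact: (proj2_sig (constructive_indefinite_description _ (Hf p)) hp).
have Neg : forall m, (1 <= m <= N)%N -> forall i : 'I_m, pd_neg (D m i) i.
  move=> m /andP[h1 h2]; case: (ltnP m N) => h3; first by apply: A4; rewrite h1 h3.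
  have E : m = N by apply/eqP; rewrite eqn_leq h2 h3.
  subst m; exact: A1neg.
pose Good n := (forall i : 'I_n, smooth_on (D n i)) /\
     (forall i j : 'I_n, i != j -> pd_pos (D n i) j) /\ exchangeable (D n).
have GoodN : Good N by split; [|split].
have stepG : forall n, (1 <= n < N)%N -> Good n.+1 -> Good n.
  move=> n hn [Hs [Hp He]]; have [hf Hf] := Hch n hn.
  have hneg : pd_neg (D n.+1 ord_max) ord_max by apply: Neg; lia.
  apply: (@step R n (D n) (D n.+1) hf Hs Hp He hneg) => p hp; by have [? [? ?]] := Hf p hp.
have allG : forall k, (k < N)%N -> Good (N - k)%N.
  elim => [|k IH] hk; first by rewrite subn0.
  have hk' : (k < N)%N by lia.
  have G := IH hk'.
  have E : (N - k = (N - k.+1).+1)%N by lia.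
  rewrite E in G; apply: stepG => //; lia.
have Gn : forall n, (1 <= n <= N)%N -> Good n.
  move=> n hn; have hk : (N - n < N)%N by lia.
  have G := allG _ hk; have E : (N - (N - n) = n)%N by lia.
  by rewrite E in G.
split; first exact: Gn.
move=> p hp hs n hn h1 i j hij.
have [_ [Hp He]] := Gn n ltac:(lia).
apply: mono_level => //.
- by apply: Neg; rewrite h1 hn.
- exact: hs.
Qed.
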